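(* Let $\ell>1$ and $4m_c^2\ge(3\ell-1)^2$. Then there is a constant $C$ such that $$\int_0^{\phi(t)-\phi(b)}|E(r,t;b)|\,dr\le C|\phi(b)|^{\frac{1}{1-\ell}}\Big(1+\ln\frac{\phi(b)}{\phi(t)}\Big)^{1-\operatorname{sgn}M}$$ for all $t\in[1,\infty)$ and $1\le b\le t$.
   Context: $\phi(t)=\frac{t^{1-\ell}}{1-\ell}$ (so $\phi<0$ and $\phi(t)-\phi(b)>0$ for $1\le b<t$). $M=\frac{\sqrt{4m_c^2-(1-3\ell)^2}}{2(\ell-1)}\ge0$, $a:=\frac12+iM$, and $\operatorname{sgn}M\in\{0,1\}$ is $1$ iff $M>0$. The kernel is $$E(r,t;b)=2^{2a}(1-\ell)^{\frac{\ell}{1-\ell}}\phi(b)^{\frac{\ell}{1-\ell}+2a}\big((\phi(t)+\phi(b))^2-r^2\big)^{-a}F\Big(a,a;1;\frac{(\phi(t)-\phi(b))^2-r^2}{(\phi(t)+\phi(b))^2-r^2}\Big),$$ with $F$ Gauss's hypergeometric function and complex powers taken with the principal branch. *)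

(* Defs.v *)
From Stdlib Require Import Reals Arith Factorial.
From Coquelicot Require Import Coquelicot.
Open Scope R_scope.

Definition cexp (z : C) : C := (exp (Re z) * cos (Im z), exp (Re z) * sin (Im z)).

(* Principal-branch complex power x^w for a REAL base x (x <> 0):
   Log x = ln x for x > 0, Log x = ln (-x) + i*pi for x < 0. Value 0 at x = 0. *)
Definition cpow_real (x : R) (w : C) : C :=
  match Rlt_dec 0 x with
  | left _ => cexp (Cmult w (RtoC (ln x)))
  | right _ =>
      match Rlt_dec x 0 with
      | left _ => cexp (Cmult w (ln (- x), PI))
      | right _ => RtoC 0
      end
  end.

Fixpoint poch (a : C) (n : nat) : C :=
  match n with
  | O => RtoC 1
  | S k => Cmult (poch a k) (Cplus a (RtoC (INR k)))
  end.

Definition hyp_term (a b c z : C) (n : nat) : C :=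
  Cmult (Cdiv (Cmult (poch a n) (poch b n)) (Cmult (poch c n) (RtoC (INR (Factorial.fact n)))))
        (Cpow z n).

(* Gauss's hypergeometric function, as the sum of its series (|z| < 1). *)
Definition hyp2F1 (a b c z : C) : C :=
  (Series (fun n => Re (hyp_term a b c z n)), Series (fun n => Im (hyp_term a b c z n))).

Definition phi (l t : R) : R := Rpower t (1 - l) / (1 - l).

Definition Mpar (l mc : R) : R := sqrt (4 * mc ^ 2 - (1 - 3 * l) ^ 2) / (2 * (l - 1)).

Definition apar (l mc : R) : C := (1 / 2, Mpar l mc).

Definition sgnM (l mc : R) : nat := if Rlt_dec 0 (Mpar l mc) then 1%nat else 0%nat.

Definition Ekernel (l mc r t b : R) : C :=
  let a := apar l mc in
  let pt := phi l t in
  let pb := phi l b in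
  Cmult (Cmult (Cmult (Cmult
    (cpow_real 2 (Cmult (RtoC 2) a))
    (cpow_real (1 - l) (RtoC (l / (1 - l)))))
    (cpow_real pb (Cplus (RtoC (l / (1 - l))) (Cmult (RtoC 2) a))))
    (cpow_real ((pt + pb) ^ 2 - r ^ 2) (Copp a)))
    (hyp2F1 a a (RtoC 1)
       (RtoC (((pt - pb) ^ 2 - r ^ 2) / ((pt + pb) ^ 2 - r ^ 2)))).

(* Main.v *)
Require Import Defs.
From Stdlib Require Import Reals Lra Lia Psatz Arith Factorial ZArith Classical.
From Coquelicot Require Import Coquelicot.
Open Scope R_scope.
Set Bullet Behavior "Strict Subproofs".


Fixpoint cc (a : C) (n : nat) : C := match n with O => RtoC 1 | S k => Cmult (cc a k) (Cdiv (Cmult (Cplus a (RtoC (INR k))) (Cplus a (RtoC (INR k)))) (RtoC ((INR k + 1)^2))) end.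

Lemma poch1 n : poch (RtoC 1) n = RtoC (INR (fact n)).
Proof.
  induction n as [|n IH]; simpl poch. reflexivity.
  rewrite IH. change (fact (S n)) with (S n * fact n)%nat.
  rewrite mult_INR, S_INR. rewrite RtoC_mult, RtoC_plus.
  rewrite ?RtoC_plus. ring.
Qed.

Lemma RtoC_neq0 x : x <> 0 -> RtoC x <> RtoC 0.
Proof. intros H E. apply H. now injection E. Qed.

Lemma hyp_term_cc a x n : hyp_term a a (RtoC 1) (RtoC x) n = Cmult (cc a n) (RtoC (x^n)).
Proof.
  unfold hyp_term. rewrite poch1, <- RtoC_pow. f_equal.
  induction n as [|n IH].
  - simpl. field.
  - simpl cc. rewrite <- IH. simpl poch.
    change (fact (S n)) with (S n * fact n)%nat.
    rewrite mult_INR, S_INR. rewrite !RtoC_mult, !RtoC_plus.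
    assert (H1 : RtoC (INR (fact n)) <> RtoC 0) by (apply RtoC_neq0; apply INR_fact_neq_0).
    assert (H2 : (RtoC (INR n) + RtoC 1)%C <> RtoC 0).
    { rewrite <- RtoC_plus. apply RtoC_neq0. pose proof (pos_INR n). lra. }
    field. split; auto.
Qed.


Lemma Cmod_sq (z : C) : Cmod z * Cmod z = Re z ^ 2 + Im z ^ 2.
Proof. destruct z as [u v]. unfold Cmod, Re, Im; simpl. rewrite sqrt_sqrt. ring. nra. Qed.

Lemma cc_mod_step M n : Cmod (cc (1/2, M) (S n)) =
  Cmod (cc (1/2, M) n) * (((INR n + 1/2)^2 + M^2) / (INR n + 1)^2).
Proof.
  simpl cc. rewrite Cmod_mult, Cmod_div.
  - rewrite Cmod_mult, Cmod_sq, Cmod_R. rewrite Rabs_right.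
    + f_equal. simpl. field. pose proof (pos_INR n). lra.
    + pose proof (pos_INR n). apply Rle_ge. nra.
  - apply RtoC_neq0. pose proof (pos_INR n). nra.
Qed.

Lemma cc_mod_bound_aux M n : Cmod (cc (1/2, M) n) * (INR n + 1) * exp (4 * (1/4 + M^2) / (INR n + 1))
   <= exp (4 * (1/4 + M^2)).
Proof.
  set (m := 1/4 + M^2).
  induction n as [|n IH].
  - simpl. rewrite Cmod_1. replace (4*m/(0+1)) with (4*m) by field. lra.
  - rewrite cc_mod_step. rewrite S_INR.
    set (x := INR n + 1) in *. set (q := Cmod (cc (1/2, M) n)) in *.
    assert (Hx : 1 <= x) by (unfold x; pose proof (pos_INR n); lra).
    assert (Hq : 0 <= q) by apply Cmod_ge_0.
    assert (Hm : 0 < m) by (unfold m; nra).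
    replace (INR n + 1/2) with (x - 1/2) by (unfold x; lra).
    replace (INR n) with (x - 1) by (unfold x; lra).
    replace (x - 1 + 1) with x by ring. replace (x - 1 + 1 + 1) with (x + 1) by ring.
    assert (E : exp (4*m/x) = exp (4*m/(x+1)) * exp (4*m/(x*(x+1)))).
    { rewrite <- exp_plus. f_equal. field. lra. }
    assert (Hr : ((x - 1/2)^2 + M^2) / x^2 * (x+1) <= x * (1 + 4*m/(x*(x+1)))).
    { apply Rmult_le_reg_r with (x^2 * (x+1)). nra.
      field_simplify; try lra. unfold m. assert (0 <= M^2 * (x^2 - x)) by (apply Rmult_le_pos; nra). assert (0 <= M^2 * (x^2 - 1)) by (apply Rmult_le_pos; nra). nra. }
    pose proof (exp_ineq1_le (4*m/(x*(x+1)))) as He.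
    assert (Hp1 : 0 < exp (4*m/(x+1))) by apply exp_pos.
    assert (Hp2 : 0 < exp (4*m/(x*(x+1)))) by apply exp_pos.
    rewrite E in IH.
    apply Rle_trans with (q * x * exp (4*m/(x+1)) * exp (4*m/(x*(x+1)))); [|lra].
    replace (q * (((x - 1/2)^2 + M^2) / x^2) * (x+1) * exp (4*m/(x+1)))
      with (q * exp (4*m/(x+1)) * (((x - 1/2)^2 + M^2) / x^2 * (x+1))) by ring.
    replace (q * x * exp (4*m/(x+1)) * exp (4*m/(x*(x+1))))
      with (q * exp (4*m/(x+1)) * (x * exp (4*m/(x*(x+1))))) by ring.
    apply Rmult_le_compat_l. apply Rmult_le_pos; lra.
    apply Rle_trans with (1 := Hr). apply Rmult_le_compat_l; lra.
Qed.

Lemma cc_mod_bound M n : Cmod (cc (1/2, M) n) * (INR n + 1) <= exp (4 * (1/4 + M^2)).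
Proof.
  pose proof (cc_mod_bound_aux M n).
  assert (0 <= Cmod (cc (1/2, M) n) * (INR n + 1)).
  { apply Rmult_le_pos. apply Cmod_ge_0. pose proof (pos_INR n); lra. }
  assert (1 <= exp (4 * (1/4 + M^2) / (INR n + 1))).
  { pose proof (exp_ineq1_le (4 * (1/4 + M^2) / (INR n + 1))).
    assert (0 <= 4 * (1/4 + M^2) / (INR n + 1)).
    { apply Rmult_le_pos. nra. apply Rlt_le, Rinv_0_lt_compat. pose proof (pos_INR n); lra. }
    lra. }
  nra.
Qed.

Lemma im_le_Cmod (c : C) : Rabs (Im c) <= Cmod c.
Proof.
  destruct c as [u v]; unfold Cmod, Im; simpl.
  rewrite <- sqrt_Rsqr_abs. apply sqrt_le_1_alt. unfold Rsqr. nra.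
Qed.

Lemma ex_series_le_R (a b : nat -> R) : (forall n, Rabs (a n) <= b n) -> ex_series b -> ex_series a.
Proof. intros H1 H2. apply (@ex_series_le R_AbsRing R_CompleteNormedModule a b); auto. Qed.

Lemma cmod_series_le (u : nat -> C) K : 0 <= K ->
  ex_series (fun n => Cmod (u n)) ->
  (forall w : C, Cmod w = 1 -> Series (fun n => Re (Cmult w (u n))) <= K) ->
  Cmod (Series (fun n => Re (u n)), Series (fun n => Im (u n))) <= K.
Proof.
  intros HK Hs Hw.
  assert (Hr : ex_series (fun n => Re (u n))).
  { apply (ex_series_le_R _ (fun n => Cmod (u n))); auto. intros n. apply re_le_Cmod. }
  assert (Hi : ex_series (fun n => Im (u n))).
  { apply (ex_series_le_R _ (fun n => Cmod (u n))); auto. intros n. apply im_le_Cmod. }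
  set (sr := Series (fun n => Re (u n))). set (si := Series (fun n => Im (u n))).
  set (c := Cmod (sr, si)).
  assert (Hc2 : c * c = sr^2 + si^2) by (unfold c; rewrite Cmod_sq; reflexivity).
  destruct (Req_dec c 0) as [H0|H0]. { rewrite H0 in *. lra. }
  assert (Hcpos : 0 < c) by (pose proof (Cmod_ge_0 (sr, si)); fold c in H; lra).
  assert (Hw1 : Cmod (sr / c, - si / c) = 1).
  { assert (Cmod (sr / c, - si / c) * Cmod (sr / c, - si / c) = 1).
    { rewrite Cmod_sq. simpl. field_simplify; [|lra]. rewrite <- Hc2. field. lra. }
    pose proof (Cmod_ge_0 (sr / c, - si / c)). nra. }
  specialize (Hw _ Hw1).
  assert (E : Series (fun n => Re (Cmult (sr / c, - si / c) (u n))) = c).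
  { rewrite (Series_ext _ (fun n => Re (u n) * (sr / c) + Im (u n) * (si / c))).
    - rewrite Series_plus.
      + rewrite !Series_scal_r. fold sr si. replace (sr * (sr / c) + si * (si / c)) with ((sr^2+si^2)/c) by (field; lra).
        rewrite <- Hc2. field. lra.
      + now apply ex_series_scal_r.
      + now apply ex_series_scal_r.
    - intros n. destruct (u n) as [p q]. unfold Cmult, Re, Im; simpl. unfold Rdiv. ring. }
  lra.
Qed.

Lemma ln_ge_1_inv y : 0 < y -> 1 - / y <= ln y.
Proof.
  intros Hy. pose proof (exp_ineq1_le (- ln y)) as H.
  rewrite exp_Ropp, exp_ln in H; lra.
Qed.

Lemma harm_bound n : sum_f_R0 (fun k => / (INR k + 1)) n <= 1 + ln (INR n + 1).
Proof.
  induction n as [|n IH].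
  - simpl. rewrite Rplus_0_l, ln_1. lra.
  - rewrite tech5, S_INR.
    assert (H : / (INR n + 1 + 1) <= ln (INR n + 1 + 1) - ln (INR n + 1)).
    { pose proof (pos_INR n).
      rewrite <- ln_div by lra.
      pose proof (ln_ge_1_inv ((INR n + 1 + 1) / (INR n + 1))) as H1.
      assert (E : 1 - / ((INR n + 1 + 1) / (INR n + 1)) = / (INR n + 1 + 1)) by (field; lra).
      rewrite E in H1. apply H1. apply Rdiv_lt_0_compat; lra. }
    lra.
Qed.

Lemma exists_floor y : 1 <= y -> exists N : nat, (0 < N)%nat /\ INR N <= y < INR N + 1.
Proof.
  intros Hy. destruct (base_Int_part y) as [H1 H2].
  set (k := Int_part y) in *.
  assert (Hk : (1 <= k)%Z).
  { assert (h : (0 < k)%Z) by (apply lt_0_IZR; lra). lia. }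
  exists (Z.to_nat k). split. lia.
  rewrite INR_IZR_INZ, Z2Nat.id by lia. lra.
Qed.

Lemma ex_series_scal_l_R c (a : nat -> R) : ex_series a -> ex_series (fun n => c * a n).
Proof.
  intros H. apply (ex_series_ext (fun n => a n * c)). intros; apply Rmult_comm.
  now apply ex_series_scal_r.
Qed.

Lemma pow_le_1 x n : 0 <= x <= 1 -> x ^ n <= 1.
Proof. intros H. induction n; simpl. lra. pose proof (pow_le x n ltac:(lra)). nra. Qed.

Lemma series_xn_harm x : 0 <= x < 1 ->
  ex_series (fun n => x ^ n / (INR n + 1)) /\
  Series (fun n => x ^ n / (INR n + 1)) <= 2 + ln (/ (1 - x)).
Proof.
  intros Hx.
  assert (Hg : ex_series (fun n => x ^ n)) by (apply ex_series_geom; rewrite Rabs_right; lra).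
  assert (Hex : ex_series (fun n => x ^ n / (INR n + 1))).
  { apply (ex_series_le_R _ (fun n => x ^ n)); auto. intros n. pose proof (pos_INR n). pose proof (pow_le x n ltac:(lra)).
    rewrite Rabs_right.
    - unfold Rdiv. rewrite <- (Rmult_1_r (x^n)) at 2. apply Rmult_le_compat_l; auto.
      rewrite <- Rinv_1. apply Rinv_le_contravar; lra.
    - apply Rle_ge, Rdiv_le_0_compat; lra. }
  split; auto.
  set (y := / (1 - x)).
  assert (Hy : 1 <= y).
  { unfold y. rewrite <- Rinv_1. apply Rinv_le_contravar; lra. }
  destruct (exists_floor y Hy) as [N [HN [HN1 HN2]]].
  rewrite (Series_incr_n _ N HN Hex).
  assert (A1 : sum_f_R0 (fun n => x ^ n / (INR n + 1)) (Init.Nat.pred N) <= 1 + ln y).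
  { apply Rle_trans with (sum_f_R0 (fun k => / (INR k + 1)) (Init.Nat.pred N)).
    - apply sum_Rle. intros k _. pose proof (pos_INR k).
      unfold Rdiv. rewrite <- (Rmult_1_l (/ (INR k + 1))) at 2.
      apply Rmult_le_compat_r. apply Rlt_le, Rinv_0_lt_compat; lra.
      apply pow_le_1; lra.
    - eapply Rle_trans; [apply harm_bound|].
      assert (E : INR (Init.Nat.pred N) + 1 = INR N).
      { destruct N; [lia|]. simpl Init.Nat.pred. rewrite S_INR; lra. }
      rewrite E. apply Rplus_le_compat_l. apply ln_le; auto.
      apply lt_0_INR; lia. }
  assert (A2 : Series (fun k => x ^ (N + k) / (INR (N + k) + 1)) <= 1).
  { apply Rle_trans with (Series (fun k => / (INR N + 1) * x ^ k)).
    - apply Series_le.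
      + intros k. pose proof (pos_INR N). pose proof (pos_INR k).
        pose proof (pow_le x k ltac:(lra)). pose proof (pow_le x N ltac:(lra)).
        rewrite plus_INR. split.
        * apply Rdiv_le_0_compat; [apply pow_le; lra| lra].
        * rewrite pow_add. unfold Rdiv.
          assert (I1: / (INR N + INR k + 1) <= / (INR N + 1)) by (apply Rinv_le_contravar; lra).
          assert (I2: x ^ N <= 1) by (apply pow_le_1; lra).
          assert (I3: 0 < / (INR N + INR k + 1)) by (apply Rinv_0_lt_compat; lra).
          apply Rle_trans with (1 * x ^ k * / (INR N + INR k + 1)).
          -- apply Rmult_le_compat_r; [lra|]. apply Rmult_le_compat_r; lra.
          -- rewrite Rmult_1_l, Rmult_comm. apply Rmult_le_compat_r; lra.
      + now apply ex_series_scal_l_R.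
    - rewrite Series_scal_l, Series_geom by (rewrite Rabs_right; lra).
      fold y. apply Rmult_le_reg_l with (INR N + 1). pose proof (pos_INR N); lra.
      field_simplify; pose proof (pos_INR N); lra. }
  lra.
Qed.

Lemma tele_bound (q : nat -> R) P x : 0 <= x < 1 -> (forall n, Rabs (q n) <= P) ->
  ex_series (fun n => (q (S n) - q n) * x ^ n) /\
  Series (fun n => (q (S n) - q n) * x ^ n) <= 2 * P.
Proof.
  intros Hx Hq.
  assert (HP : 0 <= P) by (specialize (Hq O); pose proof (Rabs_pos (q O)); lra).
  assert (Hg : ex_series (fun n => x ^ n)) by (apply ex_series_geom; rewrite Rabs_right; lra).
  assert (HgP : ex_series (fun n => P * x ^ n)) by now apply ex_series_scal_l_R.
  assert (Ha1 : ex_series (fun n => Rabs (q (S n) * x ^ n))).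
  { apply (ex_series_le_R _ (fun n => P * x ^ n)); auto. intros n. rewrite Rabs_Rabsolu, Rabs_mult.
    rewrite (Rabs_right (x^n)) by (apply Rle_ge, pow_le; lra).
    apply Rmult_le_compat_r; auto. apply pow_le; lra. }
  assert (Ha2 : ex_series (fun n => Rabs (q n * x ^ n))).
  { apply (ex_series_le_R _ (fun n => P * x ^ n)); auto. intros n. rewrite Rabs_Rabsolu, Rabs_mult.
    rewrite (Rabs_right (x^n)) by (apply Rle_ge, pow_le; lra).
    apply Rmult_le_compat_r; auto. apply pow_le; lra. }
  assert (E1 : forall n, (q (S n) - q n) * x ^ n = q (S n) * x ^ n - q n * x ^ n) by (intros; ring).
  assert (Hex : ex_series (fun n => (q (S n) - q n) * x ^ n)).
  { apply (ex_series_ext (fun n => q (S n) * x ^ n - q n * x ^ n)). intros n; rewrite E1; reflexivity.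
    apply (ex_series_minus (V := R_NormedModule)); now apply ex_series_Rabs. }
  split; auto.
  rewrite (Series_ext _ _ E1). rewrite Series_minus by (now apply ex_series_Rabs).
  rewrite (Series_incr_1 (fun n => q n * x ^ n)) by (now apply ex_series_Rabs).
  rewrite (Series_ext (fun k => q (S k) * x ^ S k) (fun k => x * (q (S k) * x ^ k))) by (intros; simpl; ring).
  rewrite Series_scal_l.
  set (S := Series (fun n => q (S n) * x ^ n)).
  assert (HS : S <= P / (1 - x)).
  { apply Rle_trans with (Rabs S); [apply Rle_abs|].
    eapply Rle_trans; [apply Series_Rabs; auto|].
    unfold Rdiv. rewrite <- (Series_geom x) by (rewrite Rabs_right; lra).
    rewrite Rmult_comm, <- Series_scal_r.
    apply Series_le.
    - intros n. split; [apply Rabs_pos|]. rewrite Rabs_mult.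
      rewrite (Rabs_right (x^n)) by (apply Rle_ge, pow_le; lra).
      rewrite Rmult_comm. apply Rmult_le_compat_l; auto. apply pow_le; lra.
    - now apply ex_series_scal_r. }
  simpl pow. rewrite Rmult_1_r.
  assert (Hq0 := Hq O). apply Rabs_le_between in Hq0.
  assert ((1 - x) * S <= P).
  { apply Rle_trans with ((1 - x) * (P / (1 - x))).
    apply Rmult_le_compat_l; lra. right; field; lra. }
  lra.
Qed.

Section Hyp.
Variable M : R.
Hypothesis HM : 0 <= M.
Let a : C := (1/2, M).
Let E := exp (4 * (1/4 + M^2)).

Lemma E_pos : 0 < E.
Proof. apply exp_pos. Qed.

Lemma cc_le n : Cmod (cc a n) <= E / (INR n + 1).
Proof.
  pose proof (cc_mod_bound M n). pose proof (pos_INR n). unfold E, a.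
  apply Rmult_le_reg_r with (INR n + 1). lra. unfold Rdiv. rewrite Rmult_assoc, Rinv_l; lra.
Qed.

Lemma u_le x n : 0 <= x -> Cmod (hyp_term a a (RtoC 1) (RtoC x) n) <= E * (x ^ n / (INR n + 1)).
Proof.
  intros Hx. rewrite hyp_term_cc, Cmod_mult, Cmod_R, Rabs_right by (apply Rle_ge, pow_le; lra).
  pose proof (cc_le n). pose proof (pow_le x n Hx).
  apply Rle_trans with (E / (INR n + 1) * x ^ n). apply Rmult_le_compat_r; auto.
  right. unfold Rdiv. ring.
Qed.

Lemma u_ex x : 0 <= x < 1 -> ex_series (fun n => Cmod (hyp_term a a (RtoC 1) (RtoC x) n)).
Proof.
  intros Hx. apply (ex_series_le_R _ (fun n => E * (x ^ n / (INR n + 1)))).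
  - intros n. rewrite Rabs_right by (apply Rle_ge, Cmod_ge_0). apply u_le; lra.
  - apply ex_series_scal_l_R. now apply series_xn_harm.
Qed.

Lemma hyp_log_bound x : 0 <= x < 1 ->
  Cmod (hyp2F1 a a (RtoC 1) (RtoC x)) <= E * (2 + ln (/ (1 - x))).
Proof.
  intros Hx. unfold hyp2F1.
  assert (Hl : 0 <= ln (/ (1 - x))).
  { rewrite <- ln_1. apply ln_le. lra. rewrite <- Rinv_1. apply Rinv_le_contravar; lra. }
  pose proof E_pos.
  apply cmod_series_le.
  - apply Rmult_le_pos; lra.
  - now apply u_ex.
  - intros w Hw. set (u := fun n => hyp_term a a (RtoC 1) (RtoC x) n).
    assert (Hb : forall n, Rabs (Re (Cmult w (u n))) <= E * (x ^ n / (INR n + 1))).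
    { intros n. eapply Rle_trans; [apply re_le_Cmod|]. rewrite Cmod_mult, Hw, Rmult_1_l.
      apply u_le; lra. }
    destruct (series_xn_harm x Hx) as [Hs1 Hs2].
    assert (Hs : ex_series (fun n => E * (x ^ n / (INR n + 1)))) by now apply ex_series_scal_l_R.
    assert (Hra : ex_series (fun n => Rabs (Re (Cmult w (u n))))).
    { apply (ex_series_le_R _ _ (fun n => ltac:(rewrite Rabs_Rabsolu; apply Hb)) Hs). }
    eapply Rle_trans; [apply Rle_abs|].
    eapply Rle_trans; [apply Series_Rabs; auto|].
    eapply Rle_trans. apply Series_le; [|exact Hs]. intros n; split; [apply Rabs_pos|apply Hb].
    rewrite Series_scal_l. apply Rmult_le_compat_l; lra.
Qed.


Let al : C := Cminus (Cmult (RtoC 2) a) (RtoC 1).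
Let be : C := Cdiv (Cminus (RtoC 1) a) (RtoC 2).
Let de : C := Cminus (Cminus (Cmult (Cmult a a) (Cplus (RtoC 1) be)) be) al.

Lemma key n : Cminus (Cmult (cc a (S n)) (Cplus (RtoC (INR n + 1)) be))
   (Cmult (cc a n) (Cplus (RtoC (INR n)) be)) =
   Cmult (cc a n) (Cplus al (Cdiv de (RtoC ((INR n + 1)^2)))).
Proof.
  cbn [cc]. rewrite !RtoC_pow, !RtoC_plus.
  assert (H : Cplus (RtoC (INR n)) (RtoC 1) <> RtoC 0).
  { rewrite <- RtoC_plus. apply RtoC_neq0. pose proof (pos_INR n). lra. }
  unfold de, be, al. field. exact H.
Qed.

Lemma Re_div_R (z : C) r : r <> 0 -> Re (Cdiv z (RtoC r)) = Re z / r.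
Proof. intros H. destruct z as [p q]. unfold Cdiv, Cinv, Cmult, Re, RtoC; simpl. field. auto. Qed.

Lemma Re_mult_R (z : C) r : Re (Cmult z (RtoC r)) = Re z * r.
Proof. destruct z as [p q]. unfold Cmult, Re, RtoC; simpl. ring. Qed.

Lemma Re_minus (z1 z2 : C) : Re (Cminus z1 z2) = Re z1 - Re z2.
Proof. destruct z1, z2. unfold Cminus, Cplus, Copp, Re; simpl. ring. Qed.

Hypothesis HMp : 0 < M.

Lemma al_nz : al <> RtoC 0.
Proof. intros H. apply (f_equal Im) in H. unfold al, a in H. simpl in H. lra. Qed.

Lemma Cmod_al_pos : 0 < Cmod al.
Proof. apply Cmod_gt_0, al_nz. Qed.

Definition Kpos := 2 * (E * (1 + Cmod be) / Cmod al) + 4 * (E * Cmod de / Cmod al).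

Lemma hyp_pos_bound x : 0 <= x < 1 -> Cmod (hyp2F1 a a (RtoC 1) (RtoC x)) <= Kpos.
Proof.
  intros Hx. unfold hyp2F1.
  pose proof E_pos as HE. pose proof Cmod_al_pos as Hal.
  assert (HP : 0 <= E * (1 + Cmod be) / Cmod al).
  { apply Rdiv_le_0_compat; [|lra]. apply Rmult_le_pos; [lra|]. pose proof (Cmod_ge_0 be); lra. }
  assert (HQ : 0 <= E * Cmod de / Cmod al).
  { apply Rdiv_le_0_compat; [|lra]. apply Rmult_le_pos; [lra|]. apply Cmod_ge_0. }
  apply cmod_series_le.
  - unfold Kpos. lra.
  - now apply u_ex.
  - intros w Hw.
    set (p := fun n => Re (Cmult (Cdiv w al) (Cmult (cc a n) (Cplus (RtoC (INR n)) be)))).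
    set (e := fun n => Re (Cmult (Cdiv (Cmult w de) al) (cc a n)) / (INR n + 1)^2).
    assert (Hid : forall n, Re (Cmult w (hyp_term a a (RtoC 1) (RtoC x) n)) =
                 (p (S n) - p n) * x ^ n - e n * x ^ n).
    { intros n. rewrite hyp_term_cc.
      assert (Hn : INR n + 1 <> 0) by (pose proof (pos_INR n); lra).
      assert (Hn2 : (INR n + 1) ^ 2 <> 0) by (apply pow_nonzero; auto).
      assert (Ew : Cmult w (cc a n) = Cminus (Cminus
          (Cmult (Cdiv w al) (Cmult (cc a (S n)) (Cplus (RtoC (INR n + 1)) be)))
          (Cmult (Cdiv w al) (Cmult (cc a n) (Cplus (RtoC (INR n)) be))))
          (Cdiv (Cmult (Cdiv (Cmult w de) al) (cc a n)) (RtoC ((INR n + 1)^2)))).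
      { assert (K := key n).
        assert (K2 : Cmult (cc a (S n)) (Cplus (RtoC (INR n + 1)) be) =
           Cplus (Cmult (cc a n) (Cplus (RtoC (INR n)) be))
                 (Cmult (cc a n) (Cplus al (Cdiv de (RtoC ((INR n + 1)^2)))))).
        { rewrite <- K. ring. }
        rewrite K2. field. repeat split; try apply al_nz; try (apply RtoC_neq0; auto). }
      rewrite Cmult_assoc, Ew, Re_mult_R, !Re_minus, Re_div_R by auto.
      unfold p, e. rewrite S_INR. ring. }
    rewrite (Series_ext _ _ Hid).
    assert (Hg : ex_series (fun n => x ^ n)) by (apply ex_series_geom; rewrite Rabs_right; lra).
    assert (Hpb : forall n, Rabs (p n) <= E * (1 + Cmod be) / Cmod al).
    { intros n. unfold p. eapply Rle_trans; [apply re_le_Cmod|].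
      rewrite !Cmod_mult, Cmod_div by apply al_nz. rewrite Hw.
      pose proof (cc_le n). pose proof (pos_INR n).
      assert (Ht : Cmod (Cplus (RtoC (INR n)) be) <= INR n + Cmod be).
      { eapply Rle_trans; [apply Cmod_triangle|]. rewrite Cmod_R, Rabs_right; lra. }
      pose proof (Cmod_ge_0 be). pose proof (Cmod_ge_0 (cc a n)).
      unfold Rdiv. rewrite Rmult_1_l, (Rmult_comm (/ Cmod al)).
      apply Rmult_le_compat_r. apply Rlt_le, Rinv_0_lt_compat; lra.
      apply Rle_trans with (E / (INR n + 1) * (INR n + Cmod be)).
      apply Rmult_le_compat; auto. apply Cmod_ge_0.
      apply Rmult_le_reg_r with (INR n + 1); [lra|].
      unfold Rdiv. field_simplify; [|lra]. assert (0 <= E * INR n * Cmod be) by (apply Rmult_le_pos; [apply Rmult_le_pos|]; lra). lra. }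
    destruct (tele_bound p _ x Hx Hpb) as [Hp1 Hp2].
    set (Q := E * Cmod de / Cmod al). assert (HQ2 : 0 <= Q) by exact HQ.
    set (qq := fun n => - / (INR n + 1)).
    assert (Hqq : forall n, Rabs (qq n) <= 1).
    { intros n. unfold qq. pose proof (pos_INR n). rewrite Rabs_Ropp, Rabs_right.
      rewrite <- Rinv_1. apply Rinv_le_contravar; lra.
      apply Rle_ge, Rlt_le, Rinv_0_lt_compat; lra. }
    destruct (tele_bound qq _ x Hx Hqq) as [Hq1 Hq2].
    assert (Heb : forall n, Rabs (e n * x ^ n) <= (2 * Q) * ((qq (S n) - qq n) * x ^ n)).
    { intros n. pose proof (pos_INR n). pose proof (pow_le x n ltac:(lra)).
      assert (Hx1 : x ^ n <= 1) by (apply pow_le_1; lra).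
      unfold qq. rewrite S_INR.
      replace (- / (INR n + 1 + 1) - - / (INR n + 1)) with (/ ((INR n + 1) * (INR n + 2))) by (field; lra).
      rewrite Rabs_mult, (Rabs_right (x^n)) by lra.
      rewrite <- Rmult_assoc. apply Rmult_le_compat_r; auto.
      unfold e. rewrite Rabs_div by (apply pow_nonzero; lra).
      rewrite (Rabs_right ((INR n + 1)^2)) by (apply Rle_ge, pow_le; lra).
      assert (Hc : Rabs (Re (Cmult (Cdiv (Cmult w de) al) (cc a n))) <= Q / (INR n + 1)).
      { eapply Rle_trans; [apply re_le_Cmod|].
        rewrite Cmod_mult, Cmod_div, Cmod_mult, Hw by apply al_nz.
        pose proof (cc_le n). unfold Q.
        replace (E * Cmod de / Cmod al / (INR n + 1)) with (1 * Cmod de / Cmod al * (E / (INR n + 1))) by (field; lra).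
        apply Rmult_le_compat_l; auto. apply Rdiv_le_0_compat; [|lra]. rewrite Rmult_1_l. apply Cmod_ge_0. }
      apply Rle_trans with (Q / (INR n + 1) / (INR n + 1)^2).
      { unfold Rdiv at 3. apply Rmult_le_compat_r; auto. apply Rlt_le, Rinv_0_lt_compat, pow_lt; lra. }
      apply Rmult_le_reg_r with ((INR n + 1)^3 * (INR n + 2)). apply Rmult_lt_0_compat; [apply pow_lt|]; lra.
      field_simplify; try lra. assert (0 <= Q * (2*INR n^2 + 3*INR n)) by (apply Rmult_le_pos; nra). nra. }
    assert (He1 : ex_series (fun n => Rabs (e n * x ^ n))).
    { apply (ex_series_le_R _ (fun n => (2 * Q) * ((qq (S n) - qq n) * x ^ n))).
      intros n. rewrite Rabs_Rabsolu. apply Heb. now apply ex_series_scal_l_R. }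
    rewrite Series_minus; auto. 2: now apply ex_series_Rabs.
    assert (- Series (fun n => e n * x ^ n) <= 4 * Q).
    { eapply Rle_trans; [apply Rabs_maj2|].
      eapply Rle_trans; [apply Series_Rabs; auto|].
      eapply Rle_trans. apply Series_le; [|apply ex_series_scal_l_R; exact Hq1].
      intros n; split; [apply Rabs_pos|apply Heb].
      rewrite Series_scal_l. unfold Q. nra. }
    unfold Kpos. fold Q. lra.
Qed.

End Hyp.

Lemma int_bound S A C0 : 0 <= A < S -> 0 <= C0 ->
  ex_RInt (fun r => C0 * / (sqrt S * sqrt (S - r))) 0 A /\
  RInt (fun r => C0 * / (sqrt S * sqrt (S - r))) 0 A <= 2 * C0.
Proof.
  intros HA HC.
  assert (Hd : forall r, r < S -> is_derive (fun r => -2 * C0 * sqrt (S - r) / sqrt S) r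
                                   (C0 * / (sqrt S * sqrt (S - r)))).
  { intros r Hr. assert (0 < S - r) by lra. assert (0 < sqrt (S - r)) by (apply sqrt_lt_R0; lra).
    assert (0 < sqrt S) by (apply sqrt_lt_R0; lra).
    auto_derive.
    - lra.
    - replace (S + - r) with (S - r) by ring. field. lra. }
  assert (HI : is_RInt (fun r => C0 * / (sqrt S * sqrt (S - r))) 0 A
     ((fun r => -2 * C0 * sqrt (S - r) / sqrt S) A - (fun r => -2 * C0 * sqrt (S - r) / sqrt S) 0)).
  { apply (is_RInt_derive (fun r => -2 * C0 * sqrt (S - r) / sqrt S)).
    - intros r Hr. rewrite Rmin_left, Rmax_right in Hr by lra. apply Hd. lra.
    - intros r Hr. rewrite Rmin_left, Rmax_right in Hr by lra.
      apply (ex_derive_continuous (K := R_AbsRing) (V := R_NormedModule)). assert (0 < S - r) by lra.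
      assert (0 < sqrt (S - r)) by (apply sqrt_lt_R0; lra).
      assert (0 < sqrt S) by (apply sqrt_lt_R0; lra).
      auto_derive. replace (S + - r) with (S - r) by ring. split; [lra|split; [|exact I]]. apply Rgt_not_eq, Rmult_lt_0_compat; lra. }
  split. { eexists; exact HI. }
  rewrite (is_RInt_unique _ _ _ _ HI). simpl.
  assert (0 < sqrt S) by (apply sqrt_lt_R0; lra).
  pose proof (sqrt_pos (S - A)).
  rewrite Rminus_0_r.
  replace (-2 * C0 * sqrt (S - A) / sqrt S - -2 * C0 * sqrt S / sqrt S) with (2 * C0 - 2 * C0 * (sqrt (S - A) / sqrt S)) by (field; lra).
  assert (0 <= 2 * C0 * (sqrt (S - A) / sqrt S)).
  { apply Rmult_le_pos; [lra|]. apply Rdiv_le_0_compat; lra. }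
  lra.
Qed.

Lemma cexp_mod z : Cmod (cexp z) = exp (Re z).
Proof.
  unfold cexp, Cmod. simpl fst. simpl snd.
  assert (E : (exp (Re z) * cos (Im z)) ^ 2 + (exp (Re z) * sin (Im z)) ^ 2 = exp (Re z) ^ 2).
  { pose proof (sin2_cos2 (Im z)) as H. unfold Rsqr in H.
    replace ((exp (Re z) * cos (Im z)) ^ 2 + (exp (Re z) * sin (Im z)) ^ 2) with
      (exp (Re z) ^ 2 * (sin (Im z) * sin (Im z) + cos (Im z) * cos (Im z))) by ring.
    rewrite H. ring. }
  rewrite E. apply sqrt_pow2. apply Rlt_le, exp_pos.
Qed.

Lemma cpow_pos x w : 0 < x -> Cmod (cpow_real x w) = exp (Re w * ln x).
Proof.
  intros H. unfold cpow_real. destruct (Rlt_dec 0 x); [|lra].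
  rewrite cexp_mod. f_equal. destruct w. unfold Cmult, RtoC, Re; simpl. ring.
Qed.

Lemma cpow_neg x w : x < 0 -> Cmod (cpow_real x w) = exp (Re w * ln (- x) - Im w * PI).
Proof.
  intros H. unfold cpow_real. destruct (Rlt_dec 0 x); [lra|]. destruct (Rlt_dec x 0); [|lra].
  rewrite cexp_mod. f_equal.
Qed.

Lemma exp_le' x y : x <= y -> exp x <= exp y.
Proof. intros [H|H]. left; now apply exp_increasing. right; now subst. Qed.

Lemma RInt_not_ex (f : R -> R) a b : ~ ex_RInt f a b -> RInt f a b = 0.
Proof.
  intros H. unfold RInt, iota, lim. simpl.
  unfold R_complete_lim.
  rewrite (Lub_Rbar_eqset _ (fun _ => True)).
  - replace (Lub_Rbar (fun _ : R => True)) with p_infty. reflexivity.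
    symmetry. apply is_lub_Rbar_unique. split. intros x _. now simpl.
      intros [x| |] Hx.
      + specialize (Hx (x+1) I). simpl in Hx. lra.
      + simpl; auto.
      + specialize (Hx 0 I). now simpl in Hx.
  - intros x; split. auto. intros _ y Hy. exfalso; apply H; now exists y.
Qed.

Lemma phi_neg l t : 1 < l -> 1 <= t -> phi l t < 0.
Proof.
  intros hl ht. unfold phi, Rpower. pose proof (exp_pos ((1 - l) * ln t)).
  unfold Rdiv. assert (/ (1 - l) < 0) by (apply Rinv_lt_0_compat; lra). nra.
Qed.

Lemma phi_mono l t b : 1 < l -> 1 <= b -> b <= t -> phi l b <= phi l t.
Proof.
  intros hl hb hbt. unfold phi, Rpower.
  assert (ln b <= ln t) by (apply ln_le; lra).
  assert (exp ((1 - l) * ln t) <= exp ((1 - l) * ln b)) by (apply exp_le'; nra).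
  unfold Rdiv. assert (/ (1 - l) < 0) by (apply Rinv_lt_0_compat; lra). nra.
Qed.

Theorem lemma3p3 (l mc : R) (hl : 1 < l) (hm : (3 * l - 1) ^ 2 <= 4 * mc ^ 2) :
  exists Cst : R, forall t b : R, 1 <= t -> 1 <= b -> b <= t ->
    RInt (fun r => Cmod (Ekernel l mc r t b)) 0 (phi l t - phi l b)
    <= Cst * Rpower (Rabs (phi l b)) (1 / (1 - l))
           * (1 + ln (phi l b / phi l t)) ^ (1 - sgnM l mc).
Proof.
  set (M := Mpar l mc).
  assert (HM : 0 <= M). { unfold M, Mpar. apply Rdiv_le_0_compat. apply sqrt_pos. lra. }
  set (E := exp (4 * (1/4 + M^2))).
  assert (HE : 0 < E) by apply exp_pos.
  set (K2 := Cmod (cpow_real 2 (Cmult (RtoC 2) (apar l mc)))).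
  set (Kl := Cmod (cpow_real (1 - l) (RtoC (l / (1 - l))))).
  assert (HK2 : 0 <= K2) by apply Cmod_ge_0.
  assert (HKl : 0 <= Kl) by apply Cmod_ge_0.
  set (FB := match Rlt_dec 0 M with left _ => Kpos M | right _ => 2 * E end).
  assert (HFB : 0 <= FB).
  { unfold FB. destruct (Rlt_dec 0 M) as [h|h]; [|lra].
    eapply Rle_trans; [apply Cmod_ge_0|]. apply (hyp_pos_bound M h 0). lra. }
  exists (K2 * Kl * 2 * FB).
  intros t b Ht Hb Hbt.
  pose proof (phi_neg l t hl Ht) as Hpt. pose proof (phi_neg l b hl Hb) as Hpb.
  pose proof (phi_mono l t b hl Hb Hbt) as Hle.
  set (pt := phi l t) in *. set (pb := phi l b) in *.
  set (A := pt - pb). set (S := - (pt + pb)).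
  set (rho := Rpower (Rabs pb) (1 / (1 - l))).
  assert (Hrho : 0 < rho) by (unfold rho, Rpower; apply exp_pos).
  assert (Hq : 1 <= pb / pt).
  { unfold Rdiv. assert (/ pt < 0) by (apply Rinv_lt_0_compat; lra). assert (pt * / pt = 1) by (field; lra). nra. }
  set (L := ln (pb / pt)).
  assert (HL : 0 <= L) by (unfold L; rewrite <- ln_1; apply ln_le; lra).
  assert (Hpow : 0 <= (1 + L) ^ (1 - sgnM l mc)) by (apply pow_le; lra).
  destruct (classic (ex_RInt (fun r => Cmod (Ekernel l mc r t b)) 0 A)) as [Hex|Hnex].
  2: { rewrite RInt_not_ex by exact Hnex.
       apply Rmult_le_pos; [|exact Hpow]. apply Rmult_le_pos; [|lra].
       apply Rmult_le_pos; [|exact HFB]. apply Rmult_le_pos; [|lra]. apply Rmult_le_pos; lra. }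
  set (FBz := match Rlt_dec 0 M with left _ => Kpos M | right _ => E * (2 + L) end).
  assert (HFBz : 0 <= FBz).
  { unfold FBz. destruct (Rlt_dec 0 M); [unfold FB in HFB; destruct (Rlt_dec 0 M); [lra|lra]|].
    apply Rmult_le_pos; lra. }
  set (C0 := K2 * Kl * rho * FBz).
  assert (HC0 : 0 <= C0) by (unfold C0; repeat apply Rmult_le_pos; lra).
  assert (HAS : 0 <= A < S) by (unfold A, S; lra).
  destruct (int_bound S A C0 HAS HC0) as [Hgex Hgle].
  assert (Hpt_ : forall r, 0 < r < A ->
            Cmod (Ekernel l mc r t b) <= C0 * / (sqrt S * sqrt (S - r))).
  { intros r Hr.
    assert (HS : 0 < S) by lra.
    assert (HSr : 0 < S - r) by lra.
    assert (HD : 0 < (pt + pb)^2 - r^2).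
    { replace ((pt + pb)^2) with (S^2) by (unfold S; ring). nra. }
    assert (Hz : 0 <= ((pt - pb)^2 - r^2) / ((pt + pb)^2 - r^2) < 1).
    { split.
      - apply Rdiv_le_0_compat; [|lra]. unfold A in Hr. nra.
      - apply Rmult_lt_reg_r with ((pt + pb)^2 - r^2); auto. unfold Rdiv.
        rewrite Rmult_assoc, Rinv_l by lra. nra. }
    set (z := ((pt - pb)^2 - r^2) / ((pt + pb)^2 - r^2)) in *.
    set (D := (pt + pb)^2 - r^2) in *.
    assert (Hcb : Cmod (cpow_real pb (Cplus (RtoC (l / (1 - l))) (Cmult (RtoC 2) (apar l mc)))) <= rho).
    { rewrite cpow_neg by lra. unfold rho, Rpower. rewrite Rabs_left by lra. apply exp_le'.
      assert (HRe : Re (Cplus (RtoC (l / (1 - l))) (Cmult (RtoC 2) (apar l mc))) = 1 / (1 - l)).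
      { unfold apar, RtoC, Cplus, Cmult, Re; simpl. field. lra. }
      assert (HIm : Im (Cplus (RtoC (l / (1 - l))) (Cmult (RtoC 2) (apar l mc))) = 2 * M).
      { unfold apar, RtoC, Cplus, Cmult, Im; simpl. fold M. ring. }
      rewrite HRe, HIm. pose proof PI_RGT_0. assert (0 <= 2 * M * PI) by (apply Rmult_le_pos; lra). lra. }
    assert (HcD : Cmod (cpow_real D (Copp (apar l mc))) <= / (sqrt S * sqrt (S - r))).
    { rewrite cpow_pos by lra.
      assert (HRe : Re (Copp (apar l mc)) = - / 2).
      { unfold apar, Copp, Re; simpl. field. }
      rewrite HRe.
      replace (exp (- / 2 * ln D)) with (/ sqrt D).
      2: { rewrite <- Rpower_sqrt by lra. unfold Rpower. rewrite <- exp_Ropp. f_equal. ring. }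
      apply Rinv_le_contravar.
      - apply Rmult_lt_0_compat; apply sqrt_lt_R0; lra.
      - rewrite <- sqrt_mult_alt by lra. apply sqrt_le_1_alt. unfold D.
        replace ((pt + pb)^2) with (S^2) by (unfold S; ring). nra. }
    assert (HF : Cmod (hyp2F1 (apar l mc) (apar l mc) (RtoC 1) (RtoC z)) <= FBz).
    { unfold FBz. change (apar l mc) with ((1/2, M) : C).
      destruct (Rlt_dec 0 M) as [h|h].
      - now apply hyp_pos_bound.
      - eapply Rle_trans; [apply hyp_log_bound; exact Hz|]. fold E.
        apply Rmult_le_compat_l; [lra|]. apply Rplus_le_compat_l. unfold L.
        assert (H1z : 1 - z = 4 * pt * pb / D) by (unfold z, D; field; unfold D in HD; lra).
        assert (Hpp : 0 < 4 * pt * pb) by nra.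
        apply ln_le. apply Rinv_0_lt_compat; lra.
        rewrite H1z, Rinv_div.
        assert (HD4 : D <= 4 * pb^2) by (unfold D; nra).
        apply Rle_trans with (4 * pb^2 / (4 * pt * pb)).
        + unfold Rdiv. apply Rmult_le_compat_r; [apply Rlt_le, Rinv_0_lt_compat; lra|lra].
        + right. field. lra. }
    unfold Ekernel. cbv zeta. fold pt pb. fold D z. fold K2 Kl.
    rewrite !Cmod_mult.
    apply Rle_trans with (K2 * Kl * rho * (/ (sqrt S * sqrt (S - r))) * FBz).
    - apply Rmult_le_compat; [repeat apply Rmult_le_pos; apply Cmod_ge_0 | apply Cmod_ge_0 | | exact HF].
      apply Rmult_le_compat; [repeat apply Rmult_le_pos; apply Cmod_ge_0 | apply Cmod_ge_0 | | exact HcD].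
      apply Rmult_le_compat; [repeat apply Rmult_le_pos; apply Cmod_ge_0 | apply Cmod_ge_0 | | exact Hcb].
      right. reflexivity.
    - right. unfold C0. ring. }
  eapply Rle_trans. apply RInt_le; [lra|exact Hex|exact Hgex|exact Hpt_].
  eapply Rle_trans. exact Hgle.
  unfold C0, FBz, FB, sgnM. fold M. fold rho. fold L.
  destruct (Rlt_dec 0 M) as [h|h].
  - simpl pow. right. ring.
  - simpl pow. rewrite Rmult_1_r.
    assert (0 <= K2 * Kl * rho * E) by (repeat apply Rmult_le_pos; lra).
    nra.
Qed.
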